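(* Consider a solution $(\Sigma_+(\tau),\mathcal{R}_1(\tau),\mathcal{R}_2(\tau),M(\tau),\psi(\tau),v(\tau))$, defined for all $\tau\ge\tau_0$, of the system \begin{align*} \Sigma_+' &= -(1-\Sigma_+^2)\Sigma_+ - \mathcal{R}_1 + (1+\Sigma_+)\mathcal{R}_2\cos 2\psi - \frac{4\Omega v^2}{3+v^2},\\ \mathcal{R}_1' &= 2\big[(1+\Sigma_+)\Sigma_+ + \mathcal{R}_2\cos 2\psi\big]\mathcal{R}_1 - 2(1+\Sigma_+)(\cos 2\psi)\mathcal{R}_2,\\ \mathcal{R}_2' &= 2\big[(1+\Sigma_+)\Sigma_+ + \mathcal{R}_2\cos 2\psi\big]\mathcal{R}_2 - 2(1+\Sigma_+)(\cos 2\psi)\mathcal{R}_1,\\ M' &= -\big[(1+\Sigma_+)^2 + \mathcal{R}_2\cos 2\psi + 3\mathcal{R}_2 M\sin 2\psi\big]M,\\ \psi' &= \frac{2}{M} + (1+\Sigma_+)\frac{\mathcal{R}_1}{\mathcal{R}_2}\sin 2\psi,\\ v' &= \frac{6}{3-v^2}\Sigma_+(1-v^2)v, \end{align*} subject to the constraint \[ \mathcal{R}_1^2-\mathcal{R}_2^2-\left(\frac{4\Omega v}{3+v^2}\right)^2=0, \] where $\Omega := 1-\Sigma_+^2-\mathcal{R}_1$ and $'$ denotes $d/d\tau$. Suppose the solution satisfies $\Omega>0$, $\mathcal{R}_1>0$ and $\mathcal{R}_2>0$ for all $\tau\ge\tau_0$. Then \[ \lim_{\tau\to+\infty}(\Sigma_+,\mathcal{R}_1,\mathcal{R}_2,v,M)=(0,0,0,0,0),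 \] and moreover \[ \lim_{\tau\to+\infty}\frac{\mathcal{R}_1}{M^2}=+\infty,\qquad \lim_{\tau\to+\infty}\frac{\mathcal{R}_2}{M^2}=+\infty. \]
   Context: This system describes spatially homogeneous Bianchi type VII$_0$ cosmologies with a tilted irrotational radiation perfect fluid (equation of state $\tilde p=\tfrac13\tilde\rho$), zero cosmological constant, in Hubble-normalized variables with dimensionless time $\tau$ ($dt/d\tau=1/H$, $H$ the Hubble scalar). Here $\Sigma_+$ is a Hubble-normalized shear component, $v\in(-1,1)$ is the tilt, $\Omega$ is the density parameter, and $\mathcal{R}_1,\mathcal{R}_2,\psi$ are defined from the Hubble-normalized shear components $\Sigma_-,\Sigma_\times$ and curvature components $N_-,N_\times$ by $\mathcal{R}_1=\Sigma_-^2+\Sigma_\times^2+N_-^2+N_\times^2$, $\mathcal{R}_2\cos2\psi=\Sigma_-^2+\Sigma_\times^2-N_-^2-N_\times^2$, $\mathcal{R}_2\sin2\psi=2(\Sigma_-N_-+\Sigma_\times N_\times)$. The variable $M=1/N_+$, where $N_+$ is the remaining Hubble-normalized spatial curvature variable; for these cosmologies (with $\Omega>0$) it is a known standing fact, used by the paper, that $N_+\to+\infty$, i.e. $M\to0^+$, as $\tau\to+\infty$. *)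

(* Defs.v *)
From Stdlib Require Import Reals.
From Coquelicot Require Import Coquelicot.
Open Scope R_scope.

Definition Omega (Sp R1 : R) : R := 1 - Sp ^ 2 - R1.

(* Main.v *)
Require Import Defs.
From Stdlib Require Import Reals Lra Psatz Classical.
From Coquelicot Require Import Coquelicot.
Open Scope R_scope.

Lemma Rabs_le_inv' (a b : R) : Rabs a <= b -> -b <= a <= b.
Proof. intros h. pose proof (Rle_abs a). pose proof (Rle_abs (-a)). rewrite Rabs_Ropp in *. lra. Qed.

Lemma D_cont (f : R -> R) (x l : R) : is_derive f x l -> continuity_pt f x.
Proof.
  intros H. apply continuity_pt_filterlim.
  apply (ex_derive_continuous f x). exists l. exact H.
Qed.

Lemma D_eq (f : R -> R) (x a b : R) : is_derive f x a -> a = b -> is_derive f x b.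
Proof. intros H ->; exact H. Qed.

Lemma mvt_lb (f df : R -> R) (a b c : R) : a <= b ->
  (forall x, a <= x <= b -> is_derive f x (df x)) ->
  (forall x, a <= x <= b -> c <= df x) -> c * (b - a) <= f b - f a.
Proof.
  intros hab hd hc.
  destruct (MVT_gen f a b df) as [x [hx e]].
  - intros x hx. apply hd. rewrite Rmin_left in hx by lra. rewrite Rmax_right in hx by lra. lra.
  - intros x hx. apply (D_cont f x (df x)). apply hd.
    rewrite Rmin_left in hx by lra. rewrite Rmax_right in hx by lra. lra.
  - rewrite Rmin_left in hx by lra. rewrite Rmax_right in hx by lra.
    rewrite e. apply Rmult_le_compat_r; [lra|]. apply hc; lra.
Qed.

Lemma mvt_ub (f df : R -> R) (a b c : R) : a <= b ->
  (forall x, a <= x <= b -> is_derive f x (df x)) ->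
  (forall x, a <= x <= b -> df x <= c) -> f b - f a <= c * (b - a).
Proof.
  intros hab hd hc.
  destruct (MVT_gen f a b df) as [x [hx e]].
  - intros x hx. apply hd. rewrite Rmin_left in hx by lra. rewrite Rmax_right in hx by lra. lra.
  - intros x hx. apply (D_cont f x (df x)). apply hd.
    rewrite Rmin_left in hx by lra. rewrite Rmax_right in hx by lra. lra.
  - rewrite Rmin_left in hx by lra. rewrite Rmax_right in hx by lra.
    rewrite e. apply Rmult_le_compat_r; [lra|]. apply hc; lra.
Qed.

Lemma lip_of_deriv (g dg : R -> R) (T0 C : R) :
  (forall x, T0 < x -> is_derive g x (dg x)) ->
  (forall x, T0 < x -> Rabs (dg x) <= C) ->
  forall s t, T0 < s -> T0 < t -> g s - g t <= C * Rabs (s - t).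
Proof.
  intros hd hb s t hs ht.
  destruct (Rle_lt_dec t s) as [h|h].
  - rewrite Rabs_right by lra.
    apply (mvt_ub g dg t s C h).
    + intros x hx; apply hd; lra.
    + intros x hx. specialize (hb x ltac:(lra)). apply Rabs_le_inv' in hb. lra.
  - rewrite Rabs_left by lra.
    assert (H := mvt_lb g dg s t (-C) ltac:(lra)).
    assert (H2 : -C * (t - s) <= g t - g s).
    { apply H. intros x hx; apply hd; lra.
      intros x hx. specialize (hb x ltac:(lra)). apply Rabs_le_inv' in hb. lra. }
    lra.
Qed.

Definition ev (P : R -> Prop) := exists T, forall t, T <= t -> P t.

Lemma ev_and P Q : ev P -> ev Q -> ev (fun t => P t /\ Q t).
Proof.
  intros [a ha] [b hb]. exists (Rmax a b). intros t ht. split.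
  apply ha. pose proof (Rmax_l a b); lra. apply hb. pose proof (Rmax_r a b); lra.
Qed.

Lemma ev_impl (P Q : R -> Prop) : (forall t, P t -> Q t) -> ev P -> ev Q.
Proof. intros h [a ha]; exists a; intros; apply h, ha; auto. Qed.

Lemma ev_ge T : ev (fun t => T <= t).
Proof. exists T; auto. Qed.

Lemma barbalat (F dF g e : R -> R) (T0 C : R) :
  0 < C ->
  (forall t, T0 < t -> is_derive F t (dF t)) ->
  (forall t, T0 < t -> dF t <= - g t + e t) ->
  (forall eps, 0 < eps -> ev (fun t => e t <= eps)) ->
  (forall eps, 0 < eps -> exists T, forall s t, T <= s -> T <= t -> F s - F t <= eps) ->
  (forall s t, T0 < s -> T0 < t -> g s - g t <= C * Rabs (s - t)) ->
  forall eps, 0 < eps -> ev (fun t => g t <= eps).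
Proof.
  intros hC hd hdF he hF hg eps heps.
  set (h := eps / (2 * C)).
  assert (hh : 0 < h) by (unfold h; apply Rdiv_lt_0_compat; lra).
  destruct (he (eps / 4) ltac:(lra)) as [T1 hT1].
  destruct (hF (eps * h / 8) ltac:(nra)) as [T2 hT2].
  exists (Rmax (T0 + 1) (Rmax T1 T2)). intros t ht.
  pose proof (Rmax_l (T0+1) (Rmax T1 T2)). pose proof (Rmax_r (T0+1) (Rmax T1 T2)).
  pose proof (Rmax_l T1 T2). pose proof (Rmax_r T1 T2).
  destruct (Rle_lt_dec (g t) eps) as [ok|bad]; [exact ok|exfalso].
  assert (key : F (t + h) - F t <= - (eps / 4) * (t + h - t)).
  { apply (mvt_ub F dF t (t + h) (-(eps/4))). lra.
    intros x hx; apply hd; lra.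
    intros x hx.
    assert (g t - g x <= C * Rabs (t - x)) by (apply hg; lra).
    rewrite Rabs_left1 in H3 by lra.
    assert (C * (x - t) <= C * h) by (apply Rmult_le_compat_l; lra).
    assert (C * h = eps / 2) by (unfold h; field; lra).
    pose proof (hdF x ltac:(lra)). pose proof (hT1 x ltac:(lra)). lra. }
  pose proof (hT2 t (t + h) ltac:(lra) ltac:(lra)).
  replace (t + h - t) with h in key by ring. nra.
Qed.

Lemma mono_cauchy (U : R -> R) (T B : R) :
  (forall s t, T <= s -> s <= t -> U s <= U t) ->
  (forall t, T <= t -> U t <= B) ->
  forall eps, 0 < eps -> exists T', forall s t, T' <= s -> T' <= t -> Rabs (U s - U t) <= eps.
Proof.
  intros hm hb eps heps.
  set (E := fun y => exists t, T <= t /\ y = U t).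
  assert (hbE : bound E). { exists B. intros y [t [ht ->]]. apply hb; auto. }
  assert (hne : exists y, E y). { exists (U T). exists T. split; [lra|auto]. }
  destruct (completeness E hbE hne) as [m [hub hlub]].
  assert (ex : exists t, T <= t /\ m - eps < U t).
  { apply NNPP. intros hn.
    assert (m <= m - eps); [|lra].
    apply hlub. intros y [t [ht ->]].
    destruct (Rle_lt_dec (U t) (m - eps)) as [?|hl]; auto.
    exfalso; apply hn; exists t; auto. }
  destruct ex as [t0 [ht0 hU0]].
  exists t0. intros s t hs ht.
  assert (U s <= m) by (apply hub; exists s; split; auto; lra).
  assert (U t <= m) by (apply hub; exists t; split; auto; lra).
  pose proof (hm t0 s ht0 hs). pose proof (hm t0 t ht0 ht).
  apply Rabs_le; lra.
Qed.

Lemma cont_eps (f : R -> R) (x : R) : continuity_pt f x ->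
  forall eps, 0 < eps -> exists d, 0 < d /\ forall y, Rabs (y - x) < d -> Rabs (f y - f x) < eps.
Proof.
  intros H eps heps.
  destruct (H eps heps) as [d [hd hy]].
  exists d; split; auto. intros y hyx.
  destruct (Req_dec y x) as [->|hne].
  - rewrite Rminus_diag, Rabs_R0; auto.
  - apply hy. unfold D_x, no_cond; simpl; unfold R_dist. repeat split; auto.
Qed.

Lemma barrier (f df : R -> R) (T0 a L eta : R) : 0 < eta -> T0 < a ->
  (forall t, T0 < t -> is_derive f t (df t)) ->
  (forall s, a <= s -> L - eta <= f s <= L + eta -> 0 <= df s) ->
  L <= f a -> forall b, a <= b -> L <= f b.
Proof.
  intros heta ha hd hpos hfa b hab.
  destruct (Rle_lt_dec L (f b)) as [ok|bad]; [exact ok|exfalso].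
  set (E := fun x => a <= x <= b /\ L <= f x).
  assert (hbE : bound E) by (exists b; intros x [hx _]; lra).
  assert (hne : exists y, E y) by (exists a; split; [lra|auto]).
  destruct (completeness E hbE hne) as [m [hub hlub]].
  assert (ham : a <= m) by (apply hub; split; [lra|auto]).
  assert (hmb : m <= b) by (apply hlub; intros x [hx _]; lra).
  assert (hcm : continuity_pt f m) by (apply (D_cont f m (df m)); apply hd; lra).
  assert (notub : forall d, 0 < d -> exists x, E x /\ m - d < x).
  { intros d hdd. apply NNPP. intros hn.
    assert (m <= m - d); [|lra].
    apply hlub. intros x hx.
    destruct (Rle_lt_dec x (m - d)) as [?|hl]; auto.
    exfalso; apply hn; exists x; auto. }
  assert (hLm : L <= f m).
  { destruct (Rle_lt_dec L (f m)) as [?|hl]; auto. exfalso.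
    destruct (cont_eps f m hcm (L - f m) ltac:(lra)) as [d [hd0 hdc]].
    destruct (notub d hd0) as [x [[hx1 hx2] hx3]].
    assert (x <= m) by (apply hub; split; auto).
    assert (Rabs (x - m) < d) by (apply Rabs_def1; lra).
    pose proof (hdc x H0). apply Rabs_def2 in H1. lra. }
  assert (hmb' : m < b) by (destruct (Req_dec m b) as [->|]; [lra|lra]).
  destruct (cont_eps f m hcm (eta / 2) ltac:(lra)) as [d [hd0 hdc]].
  set (x := Rmin (m + d / 2) b).
  assert (hx1 : m < x) by (unfold x; apply Rmin_glb_lt; lra).
  assert (hx2 : x <= b) by (unfold x; apply Rmin_r).
  assert (hx3 : x <= m + d / 2) by (unfold x; apply Rmin_l).
  assert (hfx : L <= f x).
  { destruct (Rle_lt_dec (L + eta / 2) (f m)) as [hbig|hsmall].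
    - assert (Rabs (x - m) < d) by (apply Rabs_def1; lra).
      pose proof (hdc x H). apply Rabs_def2 in H0. lra.
    - assert (0 * (x - m) <= f x - f m).
      { apply (mvt_lb f df m x 0). lra.
        intros y hy; apply hd; lra.
        intros y hy. apply hpos. lra.
        assert (Rabs (y - m) < d) by (apply Rabs_def1; lra).
        pose proof (hdc y H). apply Rabs_def2 in H0. lra. }
      lra. }
  assert (x <= m) by (apply hub; split; [lra|auto]).
  lra.
Qed.

Lemma Dconst (c x : R) : is_derive (fun _ : R => c) x 0.
Proof. apply (is_derive_const c x). Qed.
Lemma Dplus (f g : R -> R) x a b : is_derive f x a -> is_derive g x b ->
  is_derive (fun t => f t + g t) x (a + b).
Proof. intros; apply (is_derive_plus f g); auto. Qed.
Lemma Dminus (f g : R -> R) x a b : is_derive f x a -> is_derive g x b ->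
  is_derive (fun t => f t - g t) x (a - b).
Proof. intros; apply (is_derive_minus f g); auto. Qed.
Lemma Dopp (f : R -> R) x a : is_derive f x a -> is_derive (fun t => - f t) x (- a).
Proof. intros; apply (is_derive_opp f); auto. Qed.
Lemma Dmult (f g : R -> R) x a b : is_derive f x a -> is_derive g x b ->
  is_derive (fun t => f t * g t) x (a * g x + f x * b).
Proof. intros; apply (is_derive_mult f g); auto. intros; apply Rmult_comm. Qed.
Lemma Dinv (f : R -> R) x a : is_derive f x a -> f x <> 0 ->
  is_derive (fun t => / f t) x (- a / f x ^ 2).
Proof. intros; apply (is_derive_inv f); auto. Qed.
Lemma Ddiv (f g : R -> R) x a b : is_derive f x a -> is_derive g x b -> g x <> 0 ->
  is_derive (fun t => f t / g t) x ((a * g x - f x * b) / g x ^ 2).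
Proof. intros; apply (is_derive_div f g); auto. Qed.
Lemma Dsin (f : R -> R) x a : is_derive f x a -> is_derive (fun t => sin (f t)) x (cos (f x) * a).
Proof. intros H. pose proof (is_derive_comp sin f x (cos (f x)) a (is_derive_sin (f x)) H). 
  simpl in H0. unfold scal in H0; simpl in H0; unfold mult in H0; simpl in H0.
  rewrite Rmult_comm. exact H0. Qed.
Lemma Dcos (f : R -> R) x a : is_derive f x a -> is_derive (fun t => cos (f t)) x (- sin (f x) * a).
Proof. intros H. pose proof (is_derive_comp cos f x (- sin (f x)) a (is_derive_cos (f x)) H). 
  simpl in H0. unfold scal in H0; simpl in H0; unfold mult in H0; simpl in H0.
  rewrite Rmult_comm. exact H0. Qed.
Lemma Dln (f : R -> R) x a : is_derive f x a -> 0 < f x -> is_derive (fun t => ln (f t)) x (a / f x).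
Proof. intros H hp. pose proof (is_derive_comp ln f x (/ f x) a (is_derive_ln (f x) hp) H). 
  simpl in H0. unfold scal in H0; simpl in H0; unfold mult in H0; simpl in H0.
  unfold Rdiv. exact H0. Qed.
Lemma Dpow (f : R -> R) x a n : is_derive f x a ->
  is_derive (fun t => f t ^ n) x (INR n * a * f x ^ Init.Nat.pred n).
Proof. intros; apply (is_derive_pow f); auto. Qed.

Ltac dt := 
  match goal with
  | |- is_derive (fun _ => ?c) _ _ => apply Dconst
  | |- is_derive (fun t => _ + _) _ _ => eapply Dplus
  | |- is_derive (fun t => _ - _) _ _ => eapply Dminus
  | |- is_derive (fun t => - _) _ _ => eapply Dopp
  | |- is_derive (fun t => _ * _) _ _ => eapply Dmult
  | |- is_derive (fun t => _ / _) _ _ => eapply Ddiv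
  | |- is_derive (fun t => / _) _ _ => eapply Dinv
  | |- is_derive (fun t => sin _) _ _ => eapply Dsin
  | |- is_derive (fun t => cos _) _ _ => eapply Dcos
  | |- is_derive (fun t => ln _) _ _ => eapply Dln
  | |- is_derive (fun t => _ ^ _) _ _ => eapply Dpow
  end.


Record Hyp (tau0 : R) (Sp R1 R2 M psi v : R -> R) : Prop := mkHyp {
  dSp : forall t, tau0 < t -> is_derive Sp t
     (- (1 - Sp t ^ 2) * Sp t - R1 t + (1 + Sp t) * R2 t * cos (2 * psi t)
      - 4 * Omega (Sp t) (R1 t) * v t ^ 2 / (3 + v t ^ 2));
  dR1 : forall t, tau0 < t -> is_derive R1 t
     (2 * ((1 + Sp t) * Sp t + R2 t * cos (2 * psi t)) * R1 t
      - 2 * (1 + Sp t) * cos (2 * psi t) * R2 t);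
  dR2 : forall t, tau0 < t -> is_derive R2 t
     (2 * ((1 + Sp t) * Sp t + R2 t * cos (2 * psi t)) * R2 t
      - 2 * (1 + Sp t) * cos (2 * psi t) * R1 t);
  dM : forall t, tau0 < t -> is_derive M t
     (- ((1 + Sp t) ^ 2 + R2 t * cos (2 * psi t)
         + 3 * R2 t * M t * sin (2 * psi t)) * M t);
  dpsi : forall t, tau0 < t -> is_derive psi t
     (2 / M t + (1 + Sp t) * (R1 t / R2 t) * sin (2 * psi t));
  dv : forall t, tau0 < t -> is_derive v t
     (6 / (3 - v t ^ 2) * Sp t * (1 - v t ^ 2) * v t);
  hv : forall t, tau0 <= t -> -1 < v t < 1;
  hcons : forall t, tau0 <= t ->
     R1 t ^ 2 - R2 t ^ 2 - (4 * Omega (Sp t) (R1 t) * v t / (3 + v t ^ 2)) ^ 2 = 0;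
  hOmega : forall t, tau0 <= t -> 0 < Omega (Sp t) (R1 t);
  hR1 : forall t, tau0 <= t -> 0 < R1 t;
  hR2 : forall t, tau0 <= t -> 0 < R2 t;
  hMpos : forall t, tau0 <= t -> 0 < M t }.

Ltac datom0 H t ht F :=
  match type of H with Hyp _ ?Sp ?R1 ?R2 ?M ?psi ?v =>
  first [ constr_eq F Sp; apply (dSp _ _ _ _ _ _ _ H t ht)
        | constr_eq F R1; apply (dR1 _ _ _ _ _ _ _ H t ht)
        | constr_eq F R2; apply (dR2 _ _ _ _ _ _ _ H t ht)
        | constr_eq F M; apply (dM _ _ _ _ _ _ _ H t ht)
        | constr_eq F psi; apply (dpsi _ _ _ _ _ _ _ H t ht)
        | constr_eq F v; apply (dv _ _ _ _ _ _ _ H t ht) ] end.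
Ltac datom H t ht :=
  match goal with
  | |- is_derive ?F _ _ => is_var F; datom0 H t ht F
  | |- is_derive (fun x => ?F x) _ _ => is_var F; datom0 H t ht F
  end.

Ltac dall H t ht := repeat (dt || datom H t ht).

Lemma bnd tau0 Sp R1 R2 M psi v : Hyp tau0 Sp R1 R2 M psi v -> forall t, tau0 <= t ->
  -1 < Sp t < 1 /\ 0 < R2 t <= R1 t /\ R1 t < 1 /\ Sp t ^ 2 + R1 t < 1 /\
  -1 < v t < 1 /\ 0 < M t /\ 0 < 1 - Sp t ^ 2 - R1 t.
Proof.
  intros H t ht.
  pose proof (hOmega _ _ _ _ _ _ _ H t ht) as hO. unfold Omega in hO.
  pose proof (hR1 _ _ _ _ _ _ _ H t ht). pose proof (hR2 _ _ _ _ _ _ _ H t ht).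
  pose proof (hcons _ _ _ _ _ _ _ H t ht).
  pose proof (hv _ _ _ _ _ _ _ H t ht). pose proof (hMpos _ _ _ _ _ _ _ H t ht).
  assert (R2 t <= R1 t).
  { set (w := 4 * Omega (Sp t) (R1 t) * v t / (3 + v t ^ 2)) in *.
    assert (0 <= w ^ 2) by (apply pow2_ge_0). nra. }
  assert (Sp t ^ 2 < 1) by lra.
  repeat split; try lra; nra.
Qed.

Definition Qf S R2 M c s := (1+S)^2 + R2*c + 3*R2*M*s.
Definition R2d S R1 R2 c := 2*((1+S)*S + R2*c)*R2 - 2*(1+S)*c*R1.
Definition B1f S R1 R2 M c s := R2d S R1 R2 c * s - R2 * s * Qf S R2 M c s + 2*(1+S)*R1*c*s.
Definition B5f S R1 R2 M c s := -3*R2*s + B1f S R1 R2 M c s/4 - R2*s*Qf S R2 M c s/4.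
Definition dUf S R1 R2 M c s := 2*S^2 - M * B1f S R1 R2 M c s/2 + 48*M*(1+S)^2 - 48*M^2*B5f S R1 R2 M c s.

Definition Uf (Sp R1 R2 M psi v : R -> R) t := ln (1 - Sp t ^ 2 - R1 t) + / 3 * ln (1 - v t ^ 2)
  - ln (3 + v t ^ 2) - R2 t * M t * sin (2 * psi t) / 2
  - 48 * (M t + R2 t * M t ^ 2 * sin (2 * psi t) / 4).

Lemma dU tau0 Sp R1 R2 M psi v : Hyp tau0 Sp R1 R2 M psi v -> forall t, tau0 < t ->
  is_derive (Uf Sp R1 R2 M psi v) t
   (dUf (Sp t) (R1 t) (R2 t) (M t) (cos (2 * psi t)) (sin (2 * psi t))).
Proof.
  intros H t ht.
  destruct (bnd _ _ _ _ _ _ _ H t ltac:(lra)) as [hS [hR2 [hR1 [hSR [hv [hM hO]]]]]].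
  unfold Uf. eapply D_eq. dall H t ht.
  all: cbv beta; try (solve [lra | nra]).
  cbn [INR Init.Nat.pred]. unfold dUf, B5f, B1f, R2d, Qf, Omega.
  field. repeat split; try lra; nra.
Qed.

Lemma ab_mul a b A B : Rabs a <= A -> Rabs b <= B -> Rabs (a*b) <= A*B.
Proof. intros. rewrite Rabs_mult. apply Rmult_le_compat; auto using Rabs_pos. Qed.
Lemma ab_add a b A B : Rabs a <= A -> Rabs b <= B -> Rabs (a+b) <= A+B.
Proof. intros. pose proof (Rabs_triang a b). lra. Qed.
Lemma ab_sub a b A B : Rabs a <= A -> Rabs b <= B -> Rabs (a-b) <= A+B.
Proof. intros. pose proof (Rabs_triang a (-b)). rewrite Rabs_Ropp in H1. unfold Rminus. lra. Qed.
Lemma ab_opp a A : Rabs a <= A -> Rabs (-a) <= A.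
Proof. rewrite Rabs_Ropp; auto. Qed.
Lemma ab_pow a A n : Rabs a <= A -> Rabs (a ^ n) <= A ^ n.
Proof. intros. rewrite <- RPow_abs. apply pow_incr. split; auto using Rabs_pos. Qed.
Lemma ab_cst (c : R) : 0 <= c -> Rabs c <= c.
Proof. intros; rewrite Rabs_pos_eq; lra. Qed.
Lemma ab_cstn (c : R) : c <= 0 -> Rabs c <= - c.
Proof. intros; rewrite Rabs_left1; lra. Qed.
Lemma ab_inv_cst (c : R) : 0 < c -> Rabs (/ c) <= / c.
Proof. intros; rewrite Rabs_pos_eq. lra. apply Rlt_le, Rinv_0_lt_compat; auto. Qed.
Lemma ab_div a b A : Rabs a <= A -> 0 < b -> Rabs (a / b) <= A / b.
Proof. intros. unfold Rdiv. rewrite Rabs_mult. rewrite (Rabs_pos_eq (/b)) by (apply Rlt_le, Rinv_0_lt_compat; auto).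
  apply Rmult_le_compat_r. apply Rlt_le, Rinv_0_lt_compat; auto. auto. Qed.

Ltac bt :=
  match goal with
  | |- Rabs (_ * _) <= _ => eapply ab_mul; bt
  | |- Rabs (_ + _) <= _ => eapply ab_add; bt
  | |- Rabs (_ - _) <= _ => eapply ab_sub; bt
  | |- Rabs (- _) <= _ => eapply ab_opp; bt
  | |- Rabs (_ ^ _) <= _ => eapply ab_pow; bt
  | |- Rabs (_ / IZR _) <= _ => eapply ab_div; [bt | lra]
  | |- Rabs (/ IZR _) <= _ => apply ab_inv_cst; lra
  | |- Rabs (IZR _) <= _ => first [apply ab_cst; lra | apply ab_cstn; lra]
  | |- Rabs _ <= _ => eassumption
  | |- ?g => idtac "FAIL" g; fail
  end.

Lemma ineqA S R1 R2 M c s : -1 < S < 1 -> 0 < R2 <= R1 -> R1 < 1 -> 0 < M <= / 1000 ->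
  Rabs c <= 1 -> Rabs s <= 1 -> S ^ 2 <= dUf S R1 R2 M c s.
Proof.
  intros hS hR2 hR1 hM hc hs.
  assert (aS : Rabs S <= 1) by (apply Rabs_le; lra).
  assert (aR1 : Rabs R1 <= 1) by (apply Rabs_le; lra).
  assert (aR2 : Rabs R2 <= 1) by (apply Rabs_le; lra).
  assert (aM : Rabs M <= / 1000) by (apply Rabs_le; lra).
  assert (hB1 : Rabs (B1f S R1 R2 M c s) <= 22).
  { unfold B1f, R2d, Qf. eapply Rle_trans. bt. lra. }
  assert (hB5 : Rabs (B5f S R1 R2 M c s) <= 11).
  { unfold B5f. eapply Rle_trans. eapply ab_sub. eapply ab_add. bt. eapply ab_div; [exact hB1|lra].
    unfold Qf. bt. lra. }
  unfold dUf.
  assert (M * B1f S R1 R2 M c s <= 22 * M).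
  { pose proof (Rle_abs (M * B1f S R1 R2 M c s)). rewrite Rabs_mult, (Rabs_pos_eq M) in H by lra. nra. }
  assert (M^2 * B5f S R1 R2 M c s <= 11 * M^2).
  { pose proof (Rle_abs (M^2 * B5f S R1 R2 M c s)). rewrite Rabs_mult, (Rabs_pos_eq (M^2)) in H0 by nra. nra. }
  destruct (Rle_lt_dec (-1/2) S).
  - assert ((1+S)^2 >= 1/4) by nra. nra.
  - nra.
Qed.

Lemma lim0_of (f : R -> R) : (forall eps, 0 < eps -> ev (fun t => Rabs (f t) <= eps)) ->
  is_lim f p_infty 0.
Proof.
  intros h. apply is_lim_spec. intros eps.
  destruct (h (eps / 2)) as [T hT]. destruct eps; simpl; lra.
  exists T. intros x hx. rewrite Rminus_0_r. pose proof (hT x ltac:(lra)).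
  destruct eps; simpl in *; lra.
Qed.

Lemma lim0_to (f : R -> R) : is_lim f p_infty 0 ->
  forall eps, 0 < eps -> ev (fun t => Rabs (f t) <= eps).
Proof.
  intros h eps he. apply is_lim_spec in h.
  destruct (h (mkposreal eps he)) as [T hT].
  exists (T + 1). intros t ht. pose proof (hT t ltac:(lra)). simpl in H.
  rewrite Rminus_0_r in H. lra.
Qed.

Lemma liminf_of (f : R -> R) : (forall K, ev (fun t => K <= f t)) -> is_lim f p_infty p_infty.
Proof.
  intros h. apply is_lim_spec. intros K.
  destruct (h (K + 1)) as [T hT]. exists T. intros x hx. pose proof (hT x ltac:(lra)). lra.
Qed.

Lemma lip_ex (g : R -> R) (T0 C : R) :
  (forall x, T0 < x -> exists d, is_derive g x d /\ Rabs d <= C) ->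
  forall s t, T0 < s -> T0 < t -> g s - g t <= C * Rabs (s - t).
Proof.
  intros h. apply (lip_of_deriv g (Derive g) T0 C).
  - intros x hx. destruct (h x hx) as [d [hd _]].
    rewrite (is_derive_unique g x d hd). exact hd.
  - intros x hx. destruct (h x hx) as [d [hd hb]].
    rewrite (is_derive_unique g x d hd). exact hb.
Qed.

Definition Sdf S R1 R2 c v := - (1 - S ^ 2) * S - R1 + (1 + S) * R2 * c
      - 4 * Omega S R1 * v ^ 2 / (3 + v ^ 2).

Lemma Sd_bound S R1 R2 c v : -1 < S < 1 -> 0 < R2 <= R1 -> R1 < 1 -> 0 < 1 - S^2 - R1 ->
  Rabs c <= 1 -> Rabs (Sdf S R1 R2 c v) <= 9.
Proof.
  intros hS hR2 hR1 hO hc.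
  assert (aS : Rabs S <= 1) by (apply Rabs_le; lra).
  assert (aR1 : Rabs R1 <= 1) by (apply Rabs_le; lra).
  assert (aR2 : Rabs R2 <= 1) by (apply Rabs_le; lra).
  assert (hw : Rabs (4 * Omega S R1 * v ^ 2 / (3 + v ^ 2)) <= 4).
  { unfold Omega. set (w := v ^ 2). assert (0 <= w) by (unfold w; nra).
    set (y := / (3 + w)). assert (hy : y * (3 + w) = 1) by (unfold y; field; lra).
    assert (0 < y) by (unfold y; apply Rinv_0_lt_compat; lra).
    assert (hwy : 0 <= w * y <= 1) by (split; nra).
    unfold Rdiv. fold y. replace (4 * (1 - S ^ 2 - R1) * w * y) with (4 * (1 - S ^ 2 - R1) * (w * y)) by ring.
    rewrite Rabs_pos_eq. nra. nra. }
  unfold Sdf. eapply Rle_trans. eapply ab_sub. bt. exact hw. lra.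
Qed.

Lemma Rmax_le_exists (a b : R) : exists c, a <= c /\ b <= c.
Proof. exists (Rmax a b). split; [apply Rmax_l | apply Rmax_r]. Qed.

Lemma cs_bounds x : Rabs (cos x) <= 1 /\ Rabs (sin x) <= 1.
Proof. split; apply Rabs_le; [apply COS_bound | apply SIN_bound]. Qed.

Lemma U_le tau0 Sp R1 R2 M psi v : Hyp tau0 Sp R1 R2 M psi v -> forall t, tau0 <= t -> M t <= 1 ->
  Uf Sp R1 R2 M psi v t <= 13.
Proof.
  intros H t ht hM1.
  destruct (bnd _ _ _ _ _ _ _ H t ht) as [hS [hR2 [hR1 [hSR [hv [hM hO]]]]]].
  destruct (cs_bounds (2 * psi t)) as [hc hs].
  unfold Uf.
  assert (ln (1 - Sp t ^ 2 - R1 t) <= 0) by (rewrite <- ln_1; apply ln_le; nra).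
  assert (ln (1 - v t ^ 2) <= 0) by (rewrite <- ln_1; apply ln_le; nra).
  assert (0 <= ln (3 + v t ^ 2)) by (rewrite <- ln_1; apply ln_le; nra).
  assert (Rabs (R2 t * M t * sin (2 * psi t)) <= 1).
  { rewrite !Rabs_mult. rewrite (Rabs_pos_eq (R2 t)), (Rabs_pos_eq (M t)) by lra.
    assert (R2 t * M t <= 1) by nra. pose proof (Rabs_pos (sin (2 * psi t))). nra. }
  apply Rabs_le_inv' in H3.
  assert (- (R2 t * M t ^ 2 * sin (2 * psi t)) <= M t) .
  { replace (R2 t * M t ^ 2 * sin (2 * psi t)) with (M t * (R2 t * M t * sin (2 * psi t))) by ring. nra. }
  nra.
Qed.

Lemma stepA tau0 Sp R1 R2 M psi v : Hyp tau0 Sp R1 R2 M psi v ->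
  (forall eps, 0 < eps -> ev (fun t => Rabs (M t) <= eps)) ->
  forall eps, 0 < eps -> ev (fun t => Rabs (Sp t) <= eps).
Proof.
  intros H hM eps heps.
  destruct (hM (/ 1000) ltac:(lra)) as [T1 hT1].
  destruct (Rmax_le_exists T1 (tau0 + 1)) as [Ta [hTa1 hTa2]].
  assert (hTa : forall t, Ta <= t -> tau0 < t /\ M t <= / 1000).
  { intros t ht. split. lra. pose proof (hT1 t ltac:(lra)). apply Rabs_le_inv' in H0; lra. }
  assert (hineq : forall t, Ta <= t -> Sp t ^ 2 <= dUf (Sp t) (R1 t) (R2 t) (M t) (cos (2 * psi t)) (sin (2 * psi t))).
  { intros t ht. destruct (hTa t ht) as [h1 h2].
    destruct (bnd _ _ _ _ _ _ _ H t ltac:(lra)) as [hS [hR2 [hR1 [hSR [hv [hMp hO]]]]]].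
    destruct (cs_bounds (2 * psi t)) as [hc hs].
    apply ineqA; auto; lra. }
  assert (hmono : forall s t, Ta <= s -> s <= t -> Uf Sp R1 R2 M psi v s <= Uf Sp R1 R2 M psi v t).
  { intros s t hs hst.
    assert (0 * (t - s) <= Uf Sp R1 R2 M psi v t - Uf Sp R1 R2 M psi v s).
    { apply (mvt_lb _ (fun x => dUf (Sp x) (R1 x) (R2 x) (M x) (cos (2 * psi x)) (sin (2 * psi x))) s t 0 hst).
      - intros x hx. apply (dU _ _ _ _ _ _ _ H). destruct (hTa x ltac:(lra)); lra.
      - intros x hx. pose proof (hineq x ltac:(lra)). pose proof (pow2_ge_0 (Sp x)). lra. }
    lra. }
  assert (hcau := mono_cauchy (Uf Sp R1 R2 M psi v) Ta 13 hmono
     (fun t ht => U_le _ _ _ _ _ _ _ H t ltac:(destruct (hTa t ht); lra) ltac:(destruct (hTa t ht); lra))).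
  assert (hres : forall e, 0 < e -> ev (fun t => Sp t ^ 2 <= e)).
  { apply (barbalat (fun t => - Uf Sp R1 R2 M psi v t)
     (fun t => - dUf (Sp t) (R1 t) (R2 t) (M t) (cos (2 * psi t)) (sin (2 * psi t)))
     (fun t => Sp t ^ 2) (fun _ => 0) Ta 18 ltac:(lra)).
  - intros t ht. apply Dopp. apply (dU _ _ _ _ _ _ _ H). destruct (hTa t ltac:(lra)); lra.
  - intros t ht. pose proof (hineq t ltac:(lra)). lra.
  - intros e he. exists 0. intros; lra.
  - intros e he. destruct (hcau e he) as [T' hT']. exists T'. intros s t hs ht.
    pose proof (hT' s t hs ht). apply Rabs_le_inv' in H0. lra.
  - apply lip_ex. intros x hx. destruct (hTa x ltac:(lra)) as [h1 h2].
    destruct (bnd _ _ _ _ _ _ _ H x ltac:(lra)) as [hS [hR2 [hR1 [hSR [hv [hMp hO]]]]]].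
    destruct (cs_bounds (2 * psi x)) as [hc hs].
    eexists. split. apply Dpow. apply (dSp _ _ _ _ _ _ _ H x h1).
    cbn [INR Init.Nat.pred]. rewrite pow_1.
    pose proof (Sd_bound (Sp x) (R1 x) (R2 x) (cos (2 * psi x)) (v x) hS hR2 hR1 hO hc).
    unfold Sdf in H0. rewrite !Rabs_mult. rewrite Rabs_pos_eq with (x := 1 + 1) by lra.
    assert (Rabs (Sp x) <= 1) by (apply Rabs_le; lra).
    pose proof (Rabs_pos (Sp x)). pose proof (Rabs_pos (- (1 - Sp x ^ 2) * Sp x - R1 x + (1 + Sp x) * R2 x * cos (2 * psi x) -
   4 * Omega (Sp x) (R1 x) * v x ^ 2 / (3 + v x ^ 2))). nra.
  }
  destruct (hres (eps ^ 2) ltac:(nra)) as [T2 hT2].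
  exists T2. intros t ht. pose proof (hT2 t ht). simpl in H0.
  apply Rabs_le. split; nra.
Qed.

Definition dStf S R1 R2 M c s v := -(1-S^2)*S - R1 - 4*Omega S R1*v^2/(3+v^2)
   - M*(Sdf S R1 R2 c v * R2 * s + (1+S)*B1f S R1 R2 M c s)/4.

Definition Stf (Sp R2 M psi : R -> R) t := Sp t - (1 + Sp t) * R2 t * M t * sin (2 * psi t) / 4.

Lemma dSt tau0 Sp R1 R2 M psi v : Hyp tau0 Sp R1 R2 M psi v -> forall t, tau0 < t ->
  is_derive (Stf Sp R2 M psi) t
   (dStf (Sp t) (R1 t) (R2 t) (M t) (cos (2 * psi t)) (sin (2 * psi t)) (v t)).
Proof.
  intros H t ht.
  destruct (bnd _ _ _ _ _ _ _ H t ltac:(lra)) as [hS [hR2 [hR1 [hSR [hv [hM hO]]]]]].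
  unfold Stf. eapply D_eq. dall H t ht.
  all: cbv beta; try (solve [lra | nra]).
  cbn [INR Init.Nat.pred]. unfold dStf, Sdf, B1f, R2d, Qf, Omega.
  field. repeat split; try lra; nra.
Qed.

Lemma ineqB S R1 R2 M c s v : -1 < S < 1 -> 0 < R2 <= R1 -> R1 < 1 -> 0 < 1 - S^2 - R1 -> 0 < M <= 1 ->
  Rabs c <= 1 -> Rabs s <= 1 -> dStf S R1 R2 M c s v <= - R1 + (Rabs S + 14 * M).
Proof.
  intros hS hR2 hR1 hO hM hc hs.
  assert (aS : Rabs S <= 1) by (apply Rabs_le; lra).
  assert (aR1 : Rabs R1 <= 1) by (apply Rabs_le; lra).
  assert (aR2 : Rabs R2 <= 1) by (apply Rabs_le; lra).
  assert (aM : Rabs M <= 1) by (apply Rabs_le; lra).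
  assert (hB1 : Rabs (B1f S R1 R2 M c s) <= 22).
  { unfold B1f, R2d, Qf. eapply Rle_trans. bt. lra. }
  pose proof (Sd_bound S R1 R2 c v hS hR2 hR1 hO hc) as hSd.
  assert (hB3 : Rabs (Sdf S R1 R2 c v * R2 * s + (1+S)*B1f S R1 R2 M c s) <= 53).
  { eapply Rle_trans. eapply ab_add. eapply ab_mul. eapply ab_mul. exact hSd. exact aR2. exact hs.
    eapply ab_mul. bt. exact hB1. lra. }
  assert (hw : 0 <= 4*Omega S R1*v^2/(3+v^2)).
  { unfold Omega. apply Rmult_le_pos. nra. apply Rlt_le, Rinv_0_lt_compat. nra. }
  assert (h1 : -(1-S^2)*S <= Rabs S).
  { destruct (Rle_lt_dec 0 S). rewrite Rabs_pos_eq by lra. nra. rewrite Rabs_left by lra. nra. }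
  set (B := Sdf S R1 R2 c v * R2 * s + (1+S)*B1f S R1 R2 M c s) in *.
  assert (- (M * B) <= 53 * M).
  { pose proof (Rle_abs (- (M * B))). rewrite Rabs_Ropp, Rabs_mult, (Rabs_pos_eq M) in H by lra. nra. }
  unfold dStf. fold B. lra.
Qed.

Lemma stepB tau0 Sp R1 R2 M psi v : Hyp tau0 Sp R1 R2 M psi v ->
  (forall eps, 0 < eps -> ev (fun t => Rabs (M t) <= eps)) ->
  (forall eps, 0 < eps -> ev (fun t => Rabs (Sp t) <= eps)) ->
  forall eps, 0 < eps -> ev (fun t => R1 t <= eps).
Proof.
  intros H hM hS.
  destruct (hM 1 ltac:(lra)) as [T1 hT1].
  destruct (Rmax_le_exists T1 (tau0 + 1)) as [Ta [hTa1 hTa2]].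
  assert (hTa : forall t, Ta <= t -> tau0 < t /\ M t <= 1).
  { intros t ht. split. lra. pose proof (hT1 t ltac:(lra)). apply Rabs_le_inv' in H0; lra. }
  apply (barbalat (Stf Sp R2 M psi)
     (fun t => dStf (Sp t) (R1 t) (R2 t) (M t) (cos (2 * psi t)) (sin (2 * psi t)) (v t))
     R1 (fun t => Rabs (Sp t) + 14 * M t) Ta 10 ltac:(lra)).
  - intros t ht. apply (dSt _ _ _ _ _ _ _ H). destruct (hTa t ltac:(lra)); lra.
  - intros t ht. destruct (hTa t ltac:(lra)) as [h1 h2].
    destruct (bnd _ _ _ _ _ _ _ H t ltac:(lra)) as [hS0 [hR2 [hR1 [hSR [hv [hMp hO]]]]]].
    destruct (cs_bounds (2 * psi t)) as [hc hs].
    apply ineqB; auto; lra.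
  - intros e he. destruct (ev_and _ _ (hS (e/2) ltac:(lra)) (hM (e/28) ltac:(lra))) as [T hT].
    exists T. intros t ht. destruct (hT t ht) as [ha hb]. apply Rabs_le_inv' in hb. lra.
  - intros e he.
    destruct (ev_and _ _ (ev_and _ _ (hS (e/4) ltac:(lra)) (hM (e/4) ltac:(lra))) (ev_ge Ta)) as [T hT].
    exists T. intros s t hs ht.
    assert (forall x, T <= x -> Rabs (Stf Sp R2 M psi x) <= e / 2).
    { intros x hx. destruct (hT x hx) as [[ha hb] hc].
      destruct (hTa x hc) as [h1 h2].
      destruct (bnd _ _ _ _ _ _ _ H x ltac:(lra)) as [hS0 [hR2 [hR1 [hSR [hv [hMp hO]]]]]].
      destruct (cs_bounds (2 * psi x)) as [_ hsn].
      assert (aS : Rabs (Sp x) <= 1) by (apply Rabs_le; lra).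
      assert (aR2 : Rabs (R2 x) <= 1) by (apply Rabs_le; lra).
      unfold Stf. eapply Rle_trans. eapply ab_sub. exact ha. eapply ab_div; [|lra].
      eapply ab_mul. eapply ab_mul. eapply ab_mul. eapply ab_add. apply ab_cst; lra.
      exact aS. exact aR2. exact hb. exact hsn. lra. }
    pose proof (H0 s hs). pose proof (H0 t ht). apply Rabs_le_inv' in H1. apply Rabs_le_inv' in H2. lra.
  - apply lip_ex. intros x hx. destruct (hTa x ltac:(lra)) as [h1 h2].
    destruct (bnd _ _ _ _ _ _ _ H x ltac:(lra)) as [hS0 [hR2 [hR1 [hSR [hv [hMp hO]]]]]].
    destruct (cs_bounds (2 * psi x)) as [hc hs].
    assert (aS : Rabs (Sp x) <= 1) by (apply Rabs_le; lra).
    assert (aR1 : Rabs (R1 x) <= 1) by (apply Rabs_le; lra).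
    assert (aR2 : Rabs (R2 x) <= 1) by (apply Rabs_le; lra).
    eexists. split. apply (dR1 _ _ _ _ _ _ _ H x h1).
    eapply Rle_trans. bt. lra.
Qed.

Definition dY1f S R1 R2 M c s := 1 + 4*S + 3*S^2 + 3*R2*c - 2*S*c*(R2/R1) + 3*R2*M*s
  + M/2*(- Qf S R2 M c s * s * (R2/R1) + 2*(1+S)*c*s*(R2/R1)^2).

Definition Y1f (R1 R2 M psi : R -> R) t := ln (R1 t) - ln (M t) + M t * sin (2 * psi t) * R2 t / (2 * R1 t).

Lemma dY1 tau0 Sp R1 R2 M psi v : Hyp tau0 Sp R1 R2 M psi v -> forall t, tau0 < t ->
  is_derive (Y1f R1 R2 M psi) t
   (dY1f (Sp t) (R1 t) (R2 t) (M t) (cos (2 * psi t)) (sin (2 * psi t))).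
Proof.
  intros H t ht.
  destruct (bnd _ _ _ _ _ _ _ H t ltac:(lra)) as [hS [hR2 [hR1 [hSR [hv [hM hO]]]]]].
  unfold Y1f. eapply D_eq. dall H t ht.
  all: cbv beta; try (solve [lra | nra]).
  cbn [INR Init.Nat.pred]. unfold dY1f, Qf.
  field. repeat split; try lra; nra.
Qed.

Lemma ineqC S R1 R2 M c s : Rabs S <= /100 -> 0 < R2 <= R1 -> R2 <= /100 -> 0 < M <= /100 ->
  Rabs c <= 1 -> Rabs s <= 1 -> / 2 <= dY1f S R1 R2 M c s.
Proof.
  intros hS hR2 hR2' hM hc hs.
  assert (aS : Rabs S <= /100) by auto.
  assert (aR2 : Rabs R2 <= /100) by (apply Rabs_le; lra).
  assert (aM : Rabs M <= /100) by (apply Rabs_le; lra).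
  assert (arho : Rabs (R2 / R1) <= 1).
  { rewrite Rabs_pos_eq. apply Rmult_le_reg_r with R1. lra. unfold Rdiv. rewrite Rmult_assoc, Rinv_l by lra. lra.
    apply Rlt_le, Rdiv_lt_0_compat; lra. }
  assert (hrest : Rabs (4*S + 3*S^2 + 3*R2*c - 2*S*c*(R2/R1) + 3*R2*M*s
     + M/2*(- Qf S R2 M c s * s * (R2/R1) + 2*(1+S)*c*s*(R2/R1)^2)) <= /2).
  { unfold Qf. eapply Rle_trans. bt. lra. }
  apply Rabs_le_inv' in hrest. unfold dY1f. lra.
Qed.

Lemma stepC tau0 Sp R1 R2 M psi v : Hyp tau0 Sp R1 R2 M psi v ->
  (forall eps, 0 < eps -> ev (fun t => Rabs (M t) <= eps)) ->
  (forall eps, 0 < eps -> ev (fun t => Rabs (Sp t) <= eps)) ->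
  (forall eps, 0 < eps -> ev (fun t => R1 t <= eps)) ->
  forall K, ev (fun t => K <= R1 t / M t).
Proof.
  intros H hM hS hR K.
  destruct (ev_and _ _ (ev_and _ _ (hM (/100) ltac:(lra)) (hS (/100) ltac:(lra)))
     (ev_and _ _ (hR (/100) ltac:(lra)) (ev_ge (tau0 + 1)))) as [T hT].
  assert (hTa : forall t, T <= t -> tau0 < t /\ M t <= /100 /\ Rabs (Sp t) <= /100 /\ R1 t <= /100).
  { intros t ht. destruct (hT t ht) as [[h1 h2] [h3 h4]]. apply Rabs_le_inv' in h1. repeat split; lra. }
  assert (hgrow : forall t, T <= t -> Y1f R1 R2 M psi T + (t - T) / 2 <= Y1f R1 R2 M psi t).
  { intros t ht.
    assert (/2 * (t - T) <= Y1f R1 R2 M psi t - Y1f R1 R2 M psi T).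
    { apply (mvt_lb _ (fun x => dY1f (Sp x) (R1 x) (R2 x) (M x) (cos (2 * psi x)) (sin (2 * psi x))) T t (/2) ht).
      - intros x hx. apply (dY1 _ _ _ _ _ _ _ H). destruct (hTa x ltac:(lra)); lra.
      - intros x hx. destruct (hTa x ltac:(lra)) as [h1 [h2 [h3 h4]]].
        destruct (bnd _ _ _ _ _ _ _ H x ltac:(lra)) as [hS0 [hR2 [hR1 [hSR [hv [hMp hO]]]]]].
        destruct (cs_bounds (2 * psi x)) as [hc hs].
        apply ineqC; auto; lra. }
    lra. }
  exists (T + 2 * Rabs (K - Y1f R1 R2 M psi T)). intros t ht.
  pose proof (Rabs_pos (K - Y1f R1 R2 M psi T)).
  destruct (hTa t ltac:(lra)) as [h1 [h2 [h3 h4]]].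
  destruct (bnd _ _ _ _ _ _ _ H t ltac:(lra)) as [hS0 [hR2 [hR1 [hSR [hv [hMp hO]]]]]].
  destruct (cs_bounds (2 * psi t)) as [hc hs].
  pose proof (hgrow t ltac:(lra)) as hg.
  pose proof (Rle_abs (K - Y1f R1 R2 M psi T)).
  assert (hq : Rabs (M t * sin (2 * psi t) * R2 t / (2 * R1 t)) <= /2).
  { unfold Rdiv. rewrite !Rabs_mult. rewrite (Rabs_pos_eq (M t)), (Rabs_pos_eq (R2 t)) by lra.
    rewrite (Rabs_pos_eq (/ (2 * R1 t))) by (apply Rlt_le, Rinv_0_lt_compat; lra).
    assert (R2 t * / (2 * R1 t) <= /2).
    { apply Rmult_le_reg_r with (2 * R1 t). lra. rewrite Rmult_assoc, Rinv_l by lra. lra. }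
    assert (0 <= R2 t * / (2 * R1 t)) by (apply Rmult_le_pos; [lra | apply Rlt_le, Rinv_0_lt_compat; lra]).
    pose proof (Rabs_pos (sin (2 * psi t))).
    assert (M t * Rabs (sin (2 * psi t)) <= 1) by nra. nra. }
  apply Rabs_le_inv' in hq.
  assert (hY : Y1f R1 R2 M psi t = ln (R1 t) - ln (M t) + M t * sin (2 * psi t) * R2 t / (2 * R1 t)) by reflexivity.
  assert (hl : ln (R1 t / M t) = ln (R1 t) - ln (M t)) by (apply ln_div; lra).
  pose proof (exp_ineq1_le (ln (R1 t / M t))) as he.
  rewrite exp_ln in he by (apply Rdiv_lt_0_compat; lra).
  lra.
Qed.

Definition Xf S R1 R2 M c := 2*R2*c/((1+S)*M*R1) - M/4.
Definition Yf S R1 R2 M s := 2*R2*s/((1+S)*M*R1) + 1.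
Definition gamf S R1 R2 M c s Sd := Qf S R2 M c s - Sd/(1+S) + 2*(1+S)*c*R2/R1.
Definition dNf S R1 R2 M c s Sd :=
  2 * gamf S R1 R2 M c s Sd * (Xf S R1 R2 M c ^ 2 + Yf S R1 R2 M s ^ 2)
  + 2 * (Xf S R1 R2 M c * ((gamf S R1 R2 M c s Sd * M + M * Qf S R2 M c s) / 4 + 4 / M * (1 - c ^ 2 - s ^ 2))
         + Yf S R1 R2 M s * (1 - gamf S R1 R2 M c s Sd)).

Definition Nf (Sp R1 R2 M psi : R -> R) t :=
  (2 * R2 t * cos (2 * psi t) / ((1 + Sp t) * M t * R1 t) - M t / 4) ^ 2
  + (2 * R2 t * sin (2 * psi t) / ((1 + Sp t) * M t * R1 t) + 1) ^ 2.

Lemma dN tau0 Sp R1 R2 M psi v : Hyp tau0 Sp R1 R2 M psi v -> forall t, tau0 < t ->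
  is_derive (Nf Sp R1 R2 M psi) t
   (dNf (Sp t) (R1 t) (R2 t) (M t) (cos (2 * psi t)) (sin (2 * psi t))
        (Sdf (Sp t) (R1 t) (R2 t) (cos (2 * psi t)) (v t))).
Proof.
  intros H t ht.
  destruct (bnd _ _ _ _ _ _ _ H t ltac:(lra)) as [hS [hR2 [hR1 [hSR [hv [hM hO]]]]]].
  assert (0 < (1 + Sp t) * M t * R1 t) by (apply Rmult_lt_0_compat; [apply Rmult_lt_0_compat|]; lra).
  unfold Nf. eapply D_eq. dall H t ht.
  all: cbv beta; try (solve [lra | nra]).
  cbn [INR Init.Nat.pred]. unfold dNf, gamf, Xf, Yf, Sdf, Qf, Omega.
  field. repeat split; try lra; nra.
Qed.

Lemma ineqD S R1 R2 M c s Sd : Rabs S <= /1000 -> 0 < R2 <= R1 -> R2 <= /1000 -> 0 < M <= /10000 ->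
  Rabs Sd <= /1000 -> c ^ 2 + s ^ 2 = 1 -> Rabs c <= 1 -> Rabs s <= 1 ->
  /8 <= Xf S R1 R2 M c ^ 2 + Yf S R1 R2 M s ^ 2 <= 4 -> /8 <= dNf S R1 R2 M c s Sd.
Proof.
  intros hS hR2 hR2' hM hSd hcs hc hs hN.
  assert (aS := hS). apply Rabs_le_inv' in hS.
  assert (aR2 : Rabs R2 <= /1000) by (apply Rabs_le; lra).
  assert (aM : Rabs M <= /10000) by (apply Rabs_le; lra).
  unfold dNf. replace (1 - c ^ 2 - s ^ 2) with 0 by lra. replace (4 / M * 0) with 0 by ring.
  set (X := Xf S R1 R2 M c) in *. set (Y := Yf S R1 R2 M s) in *.
  assert (hX : Rabs X <= 2) by (apply Rabs_le; nra).
  assert (hY : Rabs Y <= 2) by (apply Rabs_le; nra).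
  assert (key : 2*(1+S)*c*R2/R1 = (1+S)^2*M*(X + M/4)) by (unfold X, Xf; field; lra).
  assert (hkey : Rabs ((1+S)^2*M*(X + M/4)) <= /1000).
  { eapply Rle_trans. bt. lra. }
  assert (hQ1 : Rabs (Qf S R2 M c s - 1) <= 4 / 1000).
  { replace (Qf S R2 M c s - 1) with (2*S + S^2 + R2*c + 3*R2*M*s) by (unfold Qf; ring).
    eapply Rle_trans. bt. lra. }
  set (y := Sd / (1 + S)).
  assert (hy : y * (1 + S) = Sd) by (unfold y; field; lra).
  apply Rabs_le_inv' in hSd.
  assert (hy2 : -2/1000 <= y <= 2/1000) by (split; nra).
  assert (hg : 99/100 <= gamf S R1 R2 M c s Sd <= 101/100).
  { unfold gamf. fold y. rewrite key. apply Rabs_le_inv' in hkey. apply Rabs_le_inv' in hQ1. lra. }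
  set (g := gamf S R1 R2 M c s Sd) in *.
  apply Rabs_le_inv' in hQ1.
  assert (hEx : Rabs ((g * M + M * Qf S R2 M c s) / 4 + 0) <= M).
  { rewrite Rplus_0_r. apply Rabs_le. split; nra. }
  assert (h1 : Rabs (X * ((g * M + M * Qf S R2 M c s) / 4 + 0)) <= 2 * M) by (apply ab_mul; auto).
  assert (h2 : Rabs (Y * (1 - g)) <= 2 * (1/100)) by (apply ab_mul; auto; apply Rabs_le; lra).
  apply Rabs_le_inv' in h1. apply Rabs_le_inv' in h2.
  assert (h3 : 2 * (99/100) * (X^2 + Y^2) <= 2 * g * (X^2 + Y^2)) by nra.
  lra.
Qed.

Lemma Sd_small S R1 R2 c v : -1 < S < 1 -> 0 < R2 <= R1 -> R1 < 1 -> 0 < 1 - S^2 - R1 -> -1 < v < 1 ->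
  Rabs c <= 1 -> Rabs (Sdf S R1 R2 c v) <= Rabs S + R1 + 2 * R2 + 4 * Rabs v.
Proof.
  intros hS hR2 hR1 hO hv hc.
  assert (hav : Rabs v * Rabs v = v ^ 2) by (rewrite <- Rabs_mult; rewrite Rabs_pos_eq; [ring | nra]).
  assert (hav1 : Rabs v < 1) by (apply Rabs_def1; lra).
  pose proof (Rabs_pos v).
  assert (hw : Rabs (4 * Omega S R1 * v ^ 2 / (3 + v ^ 2)) <= 4 * Rabs v).
  { unfold Omega. set (w := v ^ 2) in *. assert (0 <= w) by (unfold w; nra).
    set (y := / (3 + w)). assert (hy : y * (3 + w) = 1) by (unfold y; field; lra).
    assert (0 < y) by (unfold y; apply Rinv_0_lt_compat; lra).
    assert (hwy : 0 <= w * y <= w) by (split; nra).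
    assert (w <= Rabs v) by nra.
    unfold Rdiv. fold y. replace (4 * (1 - S ^ 2 - R1) * w * y) with (4 * (1 - S ^ 2 - R1) * (w * y)) by ring.
    rewrite Rabs_pos_eq. nra. nra. }
  assert (h1 : Rabs (- (1 - S ^ 2) * S) <= Rabs S).
  { rewrite Rabs_mult, Rabs_Ropp, Rabs_pos_eq by nra. pose proof (Rabs_pos S). nra. }
  assert (h2 : Rabs ((1 + S) * R2 * c) <= 2 * R2).
  { rewrite !Rabs_mult, (Rabs_pos_eq (1+S)), (Rabs_pos_eq R2) by lra. pose proof (Rabs_pos c). assert (0 <= (1+S)*R2 <= 2*R2) by (split; nra). nra. }
  unfold Sdf.
  pose proof (ab_sub _ _ _ _ (ab_add _ _ _ _ (ab_sub _ _ _ _ h1 (Rle_refl (Rabs R1))) h2) hw).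
  rewrite (Rabs_pos_eq R1) in H0 by lra. lra.
Qed.

Lemma sc2 x : cos x ^ 2 + sin x ^ 2 = 1.
Proof. pose proof (sin2_cos2 x). unfold Rsqr in H. lra. Qed.

Lemma stepD tau0 Sp R1 R2 M psi v : Hyp tau0 Sp R1 R2 M psi v ->
  (forall eps, 0 < eps -> ev (fun t => Rabs (M t) <= eps)) ->
  (forall eps, 0 < eps -> ev (fun t => Rabs (Sp t) <= eps)) ->
  (forall eps, 0 < eps -> ev (fun t => R1 t <= eps)) ->
  (forall eps, 0 < eps -> ev (fun t => Rabs (v t) <= eps)) ->
  (forall K, ev (fun t => K <= R1 t / M t)) ->
  forall K, ev (fun t => K <= R2 t / M t ^ 2).
Proof.
  intros H hM hS hR hv hC K.
  destruct (ev_and _ _ (ev_and _ _ (hM (/10000) ltac:(lra)) (hS (/10000) ltac:(lra)))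
     (ev_and _ _ (hR (/10000) ltac:(lra)) (ev_and _ _ (hv (/10000) ltac:(lra)) (ev_ge (tau0 + 1)))))
     as [T hT].
  assert (hTa : forall t, T <= t -> tau0 < t /\ M t <= /10000 /\ Rabs (Sp t) <= /10000 /\ R1 t <= /10000
     /\ Rabs (v t) <= /10000).
  { intros t ht. destruct (hT t ht) as [[h1 h2] [h3 [h4 h5]]]. apply Rabs_le_inv' in h1. repeat split; lra. }
  set (dNt := fun t => dNf (Sp t) (R1 t) (R2 t) (M t) (cos (2 * psi t)) (sin (2 * psi t))
        (Sdf (Sp t) (R1 t) (R2 t) (cos (2 * psi t)) (v t))).
  assert (hder : forall t, T < t -> is_derive (Nf Sp R1 R2 M psi) t (dNt t)).
  { intros t ht. apply (dN _ _ _ _ _ _ _ H). destruct (hTa t ltac:(lra)); lra. }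
  assert (hpos : forall t, T <= t -> /8 <= Nf Sp R1 R2 M psi t <= 4 -> /8 <= dNt t).
  { intros t ht hN. destruct (hTa t ht) as [h1 [h2 [h3 [h4 h5]]]].
    destruct (bnd _ _ _ _ _ _ _ H t ltac:(lra)) as [hS0 [hR2 [hR1 [hSR [hv0 [hMp hO]]]]]].
    destruct (cs_bounds (2 * psi t)) as [hc hs].
    pose proof (Sd_small _ _ _ _ _ hS0 hR2 hR1 hO hv0 hc).
    apply ineqD; auto; try lra.
    apply sc2. }
  assert (hev : ev (fun t => Nf Sp R1 R2 M psi t < /4 \/ 9/4 < Nf Sp R1 R2 M psi t)).
  { destruct (classic (exists t1, T + 1 <= t1 /\ /4 <= Nf Sp R1 R2 M psi t1)) as [[t1 [ht1 hN1]] | hno].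
    - assert (hlow : forall b, t1 <= b -> /4 <= Nf Sp R1 R2 M psi b).
      { apply (barrier _ dNt T t1 (/4) (/8)); try lra; try exact hder.
        intros s hs hb. pose proof (hpos s ltac:(lra) ltac:(lra)). lra. }
      exists (t1 + 17). intros t ht. right.
      apply NNPP. intros hn.
      assert (hup : forall s, t1 <= s <= t -> Nf Sp R1 R2 M psi s <= 3).
      { intros s hs. apply NNPP. intros hn2.
        assert (3 <= Nf Sp R1 R2 M psi t).
        { apply (barrier _ dNt T s 3 (/2)); try lra; try exact hder.
          intros s' hs' hb. pose proof (hpos s' ltac:(lra) ltac:(lra)). lra. }
        lra. }
      assert (/8 * (t - t1) <= Nf Sp R1 R2 M psi t - Nf Sp R1 R2 M psi t1).
      { apply (mvt_lb _ dNt t1 t (/8)). lra.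
        intros x hx. apply hder. lra.
        intros x hx. apply hpos. lra. split. pose proof (hlow x ltac:(lra)). lra. pose proof (hup x hx). lra. }
      lra.
    - exists (T + 1). intros t ht. left.
      destruct (Rlt_le_dec (Nf Sp R1 R2 M psi t) (/4)) as [?|hge]; auto.
      exfalso. apply hno. exists t. split; auto. }
  destruct (ev_and _ _ hev (ev_and _ _ (hC (16 * K)) (ev_ge T))) as [T2 hT2].
  exists T2. intros t ht. destruct (hT2 t ht) as [hNt [hK hTt]].
  destruct (hTa t hTt) as [h1 [h2 [h3 [h4 h5]]]].
  destruct (bnd _ _ _ _ _ _ _ H t ltac:(lra)) as [hS0 [hR2 [hR1 [hSR [hv0 [hMp hO]]]]]].
  apply Rabs_le_inv' in h3.
  set (D := (1 + Sp t) * M t * R1 t).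
  assert (hD : 0 < D) by (unfold D; apply Rmult_lt_0_compat; [apply Rmult_lt_0_compat|]; lra).
  set (a := 2 * R2 t * cos (2 * psi t) / D).
  set (b := 2 * R2 t * sin (2 * psi t) / D).
  assert (hNe : Nf Sp R1 R2 M psi t = (a - M t / 4) ^ 2 + (b + 1) ^ 2) by reflexivity.
  assert (hab : /16 <= a ^ 2 + b ^ 2).
  { rewrite hNe in hNt. destruct hNt as [hl | hr].
    - assert ((b + 1) ^ 2 < /4) by (pose proof (pow2_ge_0 (a - M t / 4)); lra).
      assert (b < - / 2) by nra. nra.
    - apply NNPP. intros hn.
      assert (a ^ 2 < /16) by (pose proof (pow2_ge_0 b); lra).
      assert (b ^ 2 < /16) by (pose proof (pow2_ge_0 a); lra).
      assert (-/4 < a < /4) by (split; nra).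
      assert (-/4 < b < /4) by (split; nra).
      assert ((a - M t / 4) ^ 2 <= /8) by nra.
      assert ((b + 1) ^ 2 <= 25/16) by nra.
      lra. }
  assert (hab2 : a ^ 2 + b ^ 2 = (2 * R2 t / D) ^ 2).
  { unfold a, b. rewrite <- (Rmult_1_r ((2 * R2 t / D) ^ 2)). rewrite <- (sc2 (2 * psi t)).
    field. lra. }
  assert (hq : /4 <= 2 * R2 t / D).
  { assert (0 < 2 * R2 t / D) by (apply Rdiv_lt_0_compat; lra). nra. }
  assert (hR2D : D / 8 <= R2 t).
  { apply Rmult_le_reg_r with (2 / D). apply Rdiv_lt_0_compat; lra.
    replace (D / 8 * (2 / D)) with (/4) by (field; lra).
    replace (R2 t * (2 / D)) with (2 * R2 t / D) by (field; lra). lra. }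
  assert (hfin : M t * R1 t / 16 <= R2 t).
  { unfold D in hR2D. nra. }
  assert (R1 t / (16 * M t) <= R2 t / M t ^ 2).
  { apply Rmult_le_reg_r with (16 * M t ^ 2). nra.
    replace (R1 t / (16 * M t) * (16 * M t ^ 2)) with (M t * R1 t) by (field; lra).
    replace (R2 t / M t ^ 2 * (16 * M t ^ 2)) with (16 * R2 t) by (field; lra). lra. }
  assert (K <= R1 t / (16 * M t)).
  { replace (R1 t / (16 * M t)) with ((R1 t / M t) / 16) by (field; lra). lra. }
  lra.
Qed.

Lemma v_small tau0 Sp R1 R2 M psi v : Hyp tau0 Sp R1 R2 M psi v -> forall t, tau0 <= t ->
  Sp t ^ 2 <= /4 -> R1 t <= /4 -> Rabs (v t) <= 2 * R1 t.
Proof.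
  intros H t ht hS hR.
  destruct (bnd _ _ _ _ _ _ _ H t ht) as [hS0 [hR2 [hR1 [hSR [hv0 [hMp hO]]]]]].
  pose proof (hcons _ _ _ _ _ _ _ H t ht) as hc. unfold Omega in hc.
  set (O := 1 - Sp t ^ 2 - R1 t) in *.
  set (y := / (3 + v t ^ 2)).
  assert (hy : y * (3 + v t ^ 2) = 1) by (unfold y; field; nra).
  assert (hy0 : /4 <= y) by nra.
  set (w := 4 * O * v t / (3 + v t ^ 2)) in *.
  assert (hw : w = 4 * O * y * v t) by (unfold w, y; field; nra).
  assert (w ^ 2 <= R1 t ^ 2) by (pose proof (pow2_ge_0 (R2 t)); lra).
  assert (Rabs w <= R1 t).
  { apply Rabs_le. split; nra. }
  assert (hO2 : /2 <= O) by (unfold O; lra).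
  rewrite hw in H1. rewrite !Rabs_mult in H1.
  rewrite (Rabs_pos_eq 4), (Rabs_pos_eq O), (Rabs_pos_eq y) in H1 by lra.
  pose proof (Rabs_pos (v t)).
  assert (O * y >= /8) by nra.
  nra.
Qed.

Theorem theorem1 (tau0 : R) (Sp R1 R2 M psi v : R -> R)
  (dSp : forall t, tau0 < t -> is_derive Sp t
     (- (1 - Sp t ^ 2) * Sp t - R1 t + (1 + Sp t) * R2 t * cos (2 * psi t)
      - 4 * Omega (Sp t) (R1 t) * v t ^ 2 / (3 + v t ^ 2)))
  (dR1 : forall t, tau0 < t -> is_derive R1 t
     (2 * ((1 + Sp t) * Sp t + R2 t * cos (2 * psi t)) * R1 t
      - 2 * (1 + Sp t) * cos (2 * psi t) * R2 t))
  (dR2 : forall t, tau0 < t -> is_derive R2 t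
     (2 * ((1 + Sp t) * Sp t + R2 t * cos (2 * psi t)) * R2 t
      - 2 * (1 + Sp t) * cos (2 * psi t) * R1 t))
  (dM : forall t, tau0 < t -> is_derive M t
     (- ((1 + Sp t) ^ 2 + R2 t * cos (2 * psi t)
         + 3 * R2 t * M t * sin (2 * psi t)) * M t))
  (dpsi : forall t, tau0 < t -> is_derive psi t
     (2 / M t + (1 + Sp t) * (R1 t / R2 t) * sin (2 * psi t)))
  (dv : forall t, tau0 < t -> is_derive v t
     (6 / (3 - v t ^ 2) * Sp t * (1 - v t ^ 2) * v t))
  (hv : forall t, tau0 <= t -> -1 < v t < 1)
  (hcons : forall t, tau0 <= t ->
     R1 t ^ 2 - R2 t ^ 2 - (4 * Omega (Sp t) (R1 t) * v t / (3 + v t ^ 2)) ^ 2 = 0)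
  (hOmega : forall t, tau0 <= t -> 0 < Omega (Sp t) (R1 t))
  (hR1 : forall t, tau0 <= t -> 0 < R1 t)
  (hR2 : forall t, tau0 <= t -> 0 < R2 t)
  (hMpos : forall t, tau0 <= t -> 0 < M t)
  (hMlim : is_lim M p_infty 0) :
  is_lim Sp p_infty 0 /\ is_lim R1 p_infty 0 /\ is_lim R2 p_infty 0 /\
  is_lim v p_infty 0 /\ is_lim M p_infty 0 /\
  is_lim (fun t => R1 t / M t ^ 2) p_infty p_infty /\
  is_lim (fun t => R2 t / M t ^ 2) p_infty p_infty.
Proof.
  assert (H : Hyp tau0 Sp R1 R2 M psi v) by (constructor; assumption).
  pose proof (lim0_to M hMlim) as hM.
  pose proof (stepA _ _ _ _ _ _ _ H hM) as hS.
  pose proof (stepB _ _ _ _ _ _ _ H hM hS) as hR.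
  assert (hRb : forall eps, 0 < eps -> ev (fun t => Rabs (R1 t) <= eps /\ Rabs (R2 t) <= eps)).
  { intros eps he. destruct (ev_and _ _ (hR eps he) (ev_ge tau0)) as [T hT].
    exists T. intros t ht. destruct (hT t ht) as [h1 h2].
    destruct (bnd _ _ _ _ _ _ _ H t h2) as [hS0 [hR2' [hR1' _]]].
    split; apply Rabs_le; lra. }
  assert (hvl : forall eps, 0 < eps -> ev (fun t => Rabs (v t) <= eps)).
  { intros eps he.
    destruct (ev_and _ _ (ev_and _ _ (hS (/2) ltac:(lra)) (hR (Rmin (/4) (eps/2)) ltac:(apply Rmin_glb_lt; lra)))
      (ev_ge tau0)) as [T hT].
    exists T. intros t ht. destruct (hT t ht) as [[h1 h2] h3].
    pose proof (Rmin_l (/4) (eps/2)). pose proof (Rmin_r (/4) (eps/2)).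
    apply Rabs_le_inv' in h1.
    pose proof (v_small _ _ _ _ _ _ _ H t h3 ltac:(nra) ltac:(lra)). lra. }
  pose proof (stepC _ _ _ _ _ _ _ H hM hS hR) as hC.
  pose proof (stepD _ _ _ _ _ _ _ H hM hS hR hvl hC) as hD.
  split; [apply lim0_of; exact hS|].
  split; [apply lim0_of; intros e he; apply (ev_impl _ _ (fun t h => proj1 h) (hRb e he))|].
  split; [apply lim0_of; intros e he; apply (ev_impl _ _ (fun t h => proj2 h) (hRb e he))|].
  split; [apply lim0_of; exact hvl|].
  split; [exact hMlim|].
  split; [|apply liminf_of; exact hD].
  apply liminf_of. intros K.
  destruct (ev_and _ _ (ev_and _ _ (hC K) (hM 1 ltac:(lra))) (ev_ge tau0)) as [T hT].
  exists T. intros t ht. destruct (hT t ht) as [[h1 h2] h3].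
  destruct (bnd _ _ _ _ _ _ _ H t h3) as [hS0 [hR2' [hR1' [_ [_ [hMp _]]]]]].
  apply Rabs_le_inv' in h2.
  assert (R1 t / M t <= R1 t / M t ^ 2).
  { replace (R1 t / M t ^ 2) with ((R1 t / M t) / M t) by (field; lra).
    assert (0 < R1 t / M t) by (apply Rdiv_lt_0_compat; lra).
    apply Rmult_le_reg_r with (M t). lra.
    replace (R1 t / M t / M t * M t) with (R1 t / M t) by (field; lra). nra. }
  lra.
Qed.
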